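(* Let $-\infty\le a<b\le\infty$, let $f,g$ be differentiable on $(a,b)$ with $g'\ne0$ on $(a,b)$, and suppose there is $c\in(a,b)$ such that either (I) $f'/g'$ is strictly increasing on $(a,c)$ and strictly decreasing on $(c,b)$, or (II) $f'/g'$ is strictly decreasing on $(a,c)$ and strictly increasing on $(c,b)$. (i) Suppose $\lim_{x\to a^+}f(x)=\lim_{x\to a^+}g(x)=0$ and $\lim_{x\to a^+}f(x)/g(x)=\lambda\in\mathbb R$. In case (I), $f(x)/g(x)>\lambda$ for all $x\in(a,b)$ if and only if $\lim_{x\to b^-}f(x)/g(x)\ge\lambda$; in case (II), $f(x)/g(x)<\lambda$ for all $x\in(a,b)$ if and only if $\lim_{x\to b^-}f(x)/g(x)\le\lambda$. (ii) Suppose $\lim_{x\to b^-}f(x)=\lim_{x\to b^-}g(x)=0$ and $\lim_{x\to b^-}f(x)/g(x)=\lambda\in\mathbb R$. In case (I), $f(x)/g(x)>\lambda$ for all $x\in(a,b)$ if and only if $\lim_{x\to a^+}f(x)/g(x)\ge\lambda$; in case (II), $f(x)/g(x)<\lambda$ for all $x\in(a,b)$ if and only if $\lim_{x\to a^+}f(x)/g(x)\le\lambda$. (The relevant one-sided limits of $f/g$ exist in $[-\infty,\infty]$ under these hypotheses.) *)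

(* Defs.v *)
From Stdlib Require Import Reals.
Open Scope R_scope.

Inductive ER : Type := Fin (r : R) | PInf | MInf.

Definition ER_lt (u v : ER) : Prop :=
  match u, v with
  | Fin x, Fin y => x < y
  | MInf, Fin _ | MInf, PInf | Fin _, PInf => True
  | _, _ => False
  end.

Definition in_ooI (a b : ER) (x : R) : Prop :=
  (match a with Fin a0 => a0 < x | MInf => True | PInf => False end) /\
  (match b with Fin b0 => x < b0 | PInf => True | MInf => False end).

Definition ev_left (a b : ER) (P : R -> Prop) : Prop :=
  match a with
  | Fin a0 => exists d, 0 < d /\ forall x, in_ooI a b x -> x < a0 + d -> P x
  | MInf => exists M, forall x, in_ooI a b x -> x < M -> P x
  | PInf => False
  end.

Definition ev_right (a b : ER) (P : R -> Prop) : Prop :=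
  match b with
  | Fin b0 => exists d, 0 < d /\ forall x, in_ooI a b x -> b0 - d < x -> P x
  | PInf => exists M, forall x, in_ooI a b x -> M < x -> P x
  | MInf => False
  end.

Definition tends (ev : (R -> Prop) -> Prop) (F : R -> R) (L : ER) : Prop :=
  match L with
  | Fin l => forall eps, 0 < eps -> ev (fun x => Rabs (F x - l) < eps)
  | PInf => forall M, ev (fun x => M < F x)
  | MInf => forall M, ev (fun x => F x < M)
  end.

Definition lim_left (a b : ER) (F : R -> R) (L : ER) : Prop := tends (ev_left a b) F L.
Definition lim_right (a b : ER) (F : R -> R) (L : ER) : Prop := tends (ev_right a b) F L.

Definition ER_ge (L : ER) (lam : R) : Prop :=
  match L with Fin l => lam <= l | PInf => True | MInf => False end.
Definition ER_le (L : ER) (lam : R) : Prop :=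
  match L with Fin l => l <= lam | PInf => False | MInf => True end.

Definition strict_incr_on (a b : ER) (h : R -> R) : Prop :=
  forall x y, in_ooI a b x -> in_ooI a b y -> x < y -> h x < h y.
Definition strict_decr_on (a b : ER) (h : R -> R) : Prop :=
  forall x y, in_ooI a b x -> in_ooI a b y -> x < y -> h y < h x.

(* Main.v *)
Require Import Defs.
From Stdlib Require Import Reals Lra Psatz Classical.
From Stdlib Require Import Ranalysis5.
Open Scope R_scope.


Definition negER (u : ER) : ER :=
  match u with Fin r => Fin (- r) | PInf => MInf | MInf => PInf end.

Lemma in_neg a b x : in_ooI (negER b) (negER a) x <-> in_ooI a b (- x).
Proof. destruct a, b; unfold in_ooI; simpl; split; intros [H1 H2]; split; try lra; tauto. Qed.

Lemma in_between a b u v z : in_ooI a b u -> in_ooI a b v -> u <= z <= v -> in_ooI a b z.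
Proof. destruct a, b; unfold in_ooI; simpl; intros [H1 H2] [H3 H4] H; split; try lra; tauto. Qed.

Lemma in_lowc a b c x : in_ooI a b c -> (in_ooI a (Fin c) x <-> in_ooI a b x /\ x < c).
Proof. destruct a, b; unfold in_ooI; simpl; intros [H1 H2]; split;
  intros; repeat split; try lra; tauto. Qed.

Lemma in_upc a b c x : in_ooI a b c -> (in_ooI (Fin c) b x <-> in_ooI a b x /\ c < x).
Proof. destruct a, b; unfold in_ooI; simpl; intros [H1 H2]; split;
  intros; repeat split; try lra; tauto. Qed.

Lemma in_min a b u v : in_ooI a b u -> in_ooI a b v -> in_ooI a b (Rmin u v).
Proof. intros; apply Rmin_case; auto. Qed.
Lemma in_max a b u v : in_ooI a b u -> in_ooI a b v -> in_ooI a b (Rmax u v).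
Proof. intros; apply Rmax_case; auto. Qed.

Lemma exR a b u : in_ooI a b u -> exists x, in_ooI a b x /\ u < x.
Proof. destruct a, b; unfold in_ooI; simpl; intros [H1 H2]; try tauto.
  - exists ((u + r0)/2); lra.
  - exists (u+1); lra.
  - exists ((u + r)/2); lra.
  - exists (u+1); lra.
Qed.

Lemma exL a b u : in_ooI a b u -> exists x, in_ooI a b x /\ x < u.
Proof. destruct a, b; unfold in_ooI; simpl; intros [H1 H2]; try tauto.
  - exists ((u + r)/2); lra.
  - exists ((u + r)/2); lra.
  - exists (u-1); lra.
  - exists (u-1); lra.
Qed.

Definition EvR a b (P : R -> Prop) := exists u, in_ooI a b u /\ forall x, in_ooI a b x -> u < x -> P x.
Definition EvL a b (P : R -> Prop) := exists u, in_ooI a b u /\ forall x, in_ooI a b x -> x < u -> P x.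

Lemma evR_iff a b x0 P : in_ooI a b x0 -> (ev_right a b P <-> EvR a b P).
Proof.
  intros H0; unfold EvR; destruct b; simpl; split.
  - intros [d [Hd HP]]. exists (Rmax (r - d) x0). split.
    + destruct a; unfold in_ooI in *; simpl in *; destruct H0; try tauto;
      unfold Rmax; destruct (Rle_dec _ _); split; try lra; tauto.
    + intros x Hx Hlt. apply HP; auto. apply Rle_lt_trans with (2 := Hlt). apply Rmax_l.
  - intros [u [Hu HP]]. exists (r - u). destruct Hu as [_ Hu]. simpl in Hu. split; [lra|].
    intros x Hx Hlt. apply HP; auto; lra.
  - intros [M HP]. exists (Rmax M x0). split.
    + destruct a; unfold in_ooI in *; simpl in *; destruct H0; try tauto;
      split; auto. apply Rlt_le_trans with x0; auto. apply Rmax_r.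
    + intros x Hx Hlt. apply HP; auto. apply Rle_lt_trans with (2 := Hlt). apply Rmax_l.
  - intros [u [Hu HP]]. exists u. auto.
  - tauto.
  - intros [u [Hu _]]. destruct Hu; tauto.
Qed.

Lemma evL_iff a b x0 P : in_ooI a b x0 -> (ev_left a b P <-> EvL a b P).
Proof.
  intros H0; unfold EvL; destruct a; simpl; split.
  - intros [d [Hd HP]]. exists (Rmin (r + d) x0). split.
    + destruct b; unfold in_ooI in *; simpl in *; destruct H0; try tauto;
      unfold Rmin; destruct (Rle_dec _ _); split; try lra; tauto.
    + intros x Hx Hlt. apply HP; auto. apply Rlt_le_trans with (1 := Hlt). apply Rmin_l.
  - intros [u [Hu HP]]. exists (u - r). destruct Hu as [Hu _]. simpl in Hu. split; [lra|].
    intros x Hx Hlt. apply HP; auto; lra.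
  - tauto.
  - intros [u [Hu _]]. destruct Hu; tauto.
  - intros [M HP]. exists (Rmin M x0). split.
    + destruct b; unfold in_ooI in *; simpl in *; destruct H0; try tauto;
      unfold Rmin; destruct (Rle_dec _ _); split; try lra; tauto.
    + intros x Hx Hlt. apply HP; auto. apply Rlt_le_trans with (1 := Hlt). apply Rmin_l.
  - intros [u [Hu HP]]. exists u. auto.
Qed.

Lemma evR_mono a b (P Q : R -> Prop) : (forall x, P x -> Q x) -> ev_right a b P -> ev_right a b Q.
Proof. destruct b; simpl; auto.
  - intros H [d [Hd HP]]; exists d; split; auto.
  - intros H [M HP]; exists M; auto. Qed.
Lemma evL_mono a b (P Q : R -> Prop) : (forall x, P x -> Q x) -> ev_left a b P -> ev_left a b Q.
Proof. destruct a; simpl; auto.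
  - intros H [d [Hd HP]]; exists d; split; auto.
  - intros H [M HP]; exists M; auto. Qed.

Lemma evR_refl a b P : ev_right a b P <-> ev_left (negER b) (negER a) (fun x => P (- x)).
Proof.
  destruct b; simpl; try tauto; split.
  - intros [d [Hd HP]]; exists d; split; auto. intros x Hx Hlt.
    first [apply (proj1 (in_neg a (Fin r) x)) in Hx | apply (proj1 (in_neg a PInf x)) in Hx]. apply HP; auto; lra.
  - intros [d [Hd HP]]; exists d; split; auto. intros x Hx Hlt.
    rewrite <- (Ropp_involutive x). apply HP; [|lra]. first [apply (proj2 (in_neg a (Fin r) _)) | apply (proj2 (in_neg a PInf _))]; rewrite Ropp_involutive; auto.
  - intros [M HP]; exists (- M). intros x Hx Hlt.
    first [apply (proj1 (in_neg a (Fin r) x)) in Hx | apply (proj1 (in_neg a PInf x)) in Hx]. apply HP; auto; lra.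
  - intros [M HP]; exists (- M). intros x Hx Hlt.
    rewrite <- (Ropp_involutive x). apply HP; [|lra]. first [apply (proj2 (in_neg a (Fin r) _)) | apply (proj2 (in_neg a PInf _))]; rewrite Ropp_involutive; auto.
Qed.

Lemma evL_refl a b P : ev_left a b P <-> ev_right (negER b) (negER a) (fun x => P (- x)).
Proof.
  destruct a; simpl; try tauto; split.
  - intros [d [Hd HP]]; exists d; split; auto. intros x Hx Hlt.
    first [apply (proj1 (in_neg (Fin r) b x)) in Hx | apply (proj1 (in_neg MInf b x)) in Hx]. apply HP; auto; lra.
  - intros [d [Hd HP]]; exists d; split; auto. intros x Hx Hlt.
    rewrite <- (Ropp_involutive x). apply HP; [|lra]. first [apply (proj2 (in_neg (Fin r) b _)) | apply (proj2 (in_neg MInf b _))]; rewrite Ropp_involutive; auto.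
  - intros [M HP]; exists (- M). intros x Hx Hlt.
    first [apply (proj1 (in_neg (Fin r) b x)) in Hx | apply (proj1 (in_neg MInf b x)) in Hx]. apply HP; auto; lra.
  - intros [M HP]; exists (- M). intros x Hx Hlt.
    rewrite <- (Ropp_involutive x). apply HP; [|lra]. first [apply (proj2 (in_neg (Fin r) b _)) | apply (proj2 (in_neg MInf b _))]; rewrite Ropp_involutive; auto.
Qed.

Lemma limR_refl a b F L : lim_right a b F L <-> lim_left (negER b) (negER a) (fun x => F (- x)) L.
Proof.
  unfold lim_right, lim_left, tends; destruct L; split; intros H.
  - intros e He. apply (proj1 (evR_refl a b (fun x => Rabs (F x - r) < e))). apply H; auto.
  - intros e He. apply (proj2 (evR_refl a b _)). apply H; auto.
  - intros e. apply (proj1 (evR_refl a b (fun x => e < F x))). apply H; auto.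
  - intros e. apply (proj2 (evR_refl a b _)). apply H; auto.
  - intros e. apply (proj1 (evR_refl a b (fun x => F x < e))). apply H; auto.
  - intros e. apply (proj2 (evR_refl a b _)). apply H; auto.
Qed.

Lemma limL_refl a b F L : lim_left a b F L <-> lim_right (negER b) (negER a) (fun x => F (- x)) L.
Proof.
  unfold lim_right, lim_left, tends; destruct L; split; intros H.
  - intros e He. apply (proj1 (evL_refl a b (fun x => Rabs (F x - r) < e))). apply H; auto.
  - intros e He. apply (proj2 (evL_refl a b _)). apply H; auto.
  - intros e. apply (proj1 (evL_refl a b (fun x => e < F x))). apply H; auto.
  - intros e. apply (proj2 (evL_refl a b _)). apply H; auto.
  - intros e. apply (proj1 (evL_refl a b (fun x => F x < e))). apply H; auto.
  - intros e. apply (proj2 (evL_refl a b _)). apply H; auto.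
Qed.

Lemma tends_opp (ev : (R -> Prop) -> Prop) F L :
  (forall P Q : R -> Prop, (forall x, P x -> Q x) -> ev P -> ev Q) ->
  tends ev F L -> tends ev (fun x => - F x) (negER L).
Proof.
  intros Hm; destruct L; simpl; intros H.
  - intros e He. apply Hm with (2 := H e He). intros x Hx.
    replace (- F x - - r) with (- (F x - r)) by ring. rewrite Rabs_Ropp; auto.
  - intros M. apply Hm with (2 := H (- M)). intros x Hx; lra.
  - intros M. apply Hm with (2 := H (- M)). intros x Hx; lra.
Qed.

Lemma tends_ext (ev : (R -> Prop) -> Prop) F G L :
  (forall P Q : R -> Prop, (forall x, P x -> Q x) -> ev P -> ev Q) ->
  (forall x, F x = G x) ->
  tends ev F L -> tends ev G L.
Proof.
  intros Hm HFG; destruct L; simpl; intros H.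
  - intros e He. apply Hm with (2 := H e He). intros x; rewrite HFG; auto.
  - intros M. apply Hm with (2 := H M). intros x; rewrite HFG; auto.
  - intros M. apply Hm with (2 := H M). intros x; rewrite HFG; auto.
Qed.


Lemma mono_limR a b F y : in_ooI a b y ->
  (forall u v, in_ooI a b u -> in_ooI a b v -> y < u -> u < v -> F u <= F v) ->
  exists L, lim_right a b F L.
Proof.
  intros Hy Hm.
  destruct (classic (exists M, forall u, in_ooI a b u -> y < u -> F u <= M)) as [[M HM]|HNB].
  - set (E := fun z => exists u, in_ooI a b u /\ y < u /\ z = F u).
    assert (Hb : bound E). { exists M. intros z [u [Hu [Hyu ->]]]. apply HM; auto. }
    assert (Hne : exists z, E z). { destruct (exR a b y Hy) as [x1 [Hx1 Hl]]. exists (F x1), x1; auto. }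
    destruct (completeness E Hb Hne) as [s [Hub Hlub]].
    exists (Fin s). unfold lim_right, tends. intros e He. apply (evR_iff a b y); auto.
    assert (Hex : exists u, in_ooI a b u /\ y < u /\ s - e < F u).
    { apply NNPP; intro Hn. assert (Hu2 : is_upper_bound E (s - e)).
      { intros z [u [Hu [Hyu ->]]]. apply Rnot_lt_le; intro; apply Hn; exists u; split; [auto | split; auto]. }
      specialize (Hlub _ Hu2). lra. }
    destruct Hex as [u0 [Hu0 [Hyu0 Hsu0]]]. exists u0. split; auto. intros x Hx Hlt.
    assert (F u0 <= F x) by (apply Hm; auto).
    assert (F x <= s) by (apply Hub; exists x; split; [auto|split; [lra|auto]]).
    apply Rabs_def1; lra.
  - exists PInf. intros M. apply (evR_iff a b y); auto.
    assert (Hex : exists u, in_ooI a b u /\ y < u /\ M < F u).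
    { apply NNPP; intro Hn; apply HNB; exists M; intros u Hu Hyu; apply Rnot_lt_le; intro; apply Hn; exists u; split; [auto | split; auto]. }
    destruct Hex as [u [Hu [Hyu HMu]]]. exists u. split; auto. intros x Hx Hlt.
    assert (F u <= F x) by (apply Hm; auto). lra.
Qed.

Lemma mono_limR_dec a b F y : in_ooI a b y ->
  (forall u v, in_ooI a b u -> in_ooI a b v -> y < u -> u < v -> F v <= F u) ->
  exists L, lim_right a b F L.
Proof.
  intros Hy Hm. destruct (mono_limR a b (fun x => - F x) y Hy) as [L HL].
  { intros u v Hu Hv H1 H2. specialize (Hm u v Hu Hv H1 H2). lra. }
  exists (negER L). apply tends_ext with (F := fun x => - - F x).
  - intros P Q; apply evR_mono.
  - intros; ring.
  - apply tends_opp with (F := fun x => - F x); auto. intros P Q; apply evR_mono.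
Qed.

Lemma cauchy a b f g f' g' u v :
  (forall x, in_ooI a b x -> derivable_pt_lim f x (f' x)) ->
  (forall x, in_ooI a b x -> derivable_pt_lim g x (g' x)) ->
  in_ooI a b u -> in_ooI a b v -> u < v ->
  exists z, u < z < v /\ (g v - g u) * f' z = (f v - f u) * g' z.
Proof.
  intros Hf Hg Hu Hv Huv.
  assert (pr1 : forall z, u < z < v -> derivable_pt f z).
  { intros z Hz. exists (f' z). apply Hf. apply in_between with u v; auto; lra. }
  assert (pr2 : forall z, u < z < v -> derivable_pt g z).
  { intros z Hz. exists (g' z). apply Hg. apply in_between with u v; auto; lra. }
  destruct (MVT f g u v pr1 pr2 Huv) as [z [P HP]].
  - intros z Hz. apply derivable_continuous_pt. exists (f' z). apply Hf. apply in_between with u v; auto.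
  - intros z Hz. apply derivable_continuous_pt. exists (g' z). apply Hg. apply in_between with u v; auto.
  - exists z. split; auto.
    rewrite (derive_pt_eq_0 f z (f' z)) in HP; [| apply Hf; apply in_between with u v; auto; lra].
    rewrite (derive_pt_eq_0 g z (g' z)) in HP; [| apply Hg; apply in_between with u v; auto; lra].
    auto.
Qed.

Lemma ginj a b g g' u v :
  (forall x, in_ooI a b x -> derivable_pt_lim g x (g' x)) ->
  (forall x, in_ooI a b x -> g' x <> 0) ->
  in_ooI a b u -> in_ooI a b v -> u < v -> g u <> g v.
Proof.
  intros Hg Hg0 Hu Hv Huv.
  destruct (cauchy a b g (fun x => x) g' (fun _ => 1) u v Hg) as [z [Hz Hzz]]; auto.
  { intros x _. apply derivable_pt_lim_id. }
  intro E. rewrite E in Hzz. assert (g' z = 0).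
  { apply (Rmult_eq_reg_l (v - u)); [|lra]. rewrite Hzz; ring. }
  apply (Hg0 z); auto. apply in_between with u v; auto; lra.
Qed.

Lemma ivt_gen g u v k : (forall z, u <= z <= v -> continuity_pt g z) -> u < v ->
  (g u < k < g v \/ g v < k < g u) -> exists s, u <= s <= v /\ g s = k.
Proof.
  intros Hc Huv [[H1 H2]|[H1 H2]].
  - destruct (IVT_interv (g - fct_cte k)%F u v) as [s [Hs Hs0]]; auto.
    + intros z Hz. apply continuity_pt_minus; auto. apply continuity_pt_const. intros x y; reflexivity.
    + unfold minus_fct, fct_cte; lra.
    + unfold minus_fct, fct_cte; lra.
    + exists s. unfold minus_fct, fct_cte in Hs0. split; auto; lra.
  - destruct (IVT_interv (fct_cte k - g)%F u v) as [s [Hs Hs0]]; auto.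
    + intros z Hz. apply continuity_pt_minus; auto. apply continuity_pt_const. intros x y; reflexivity.
    + unfold minus_fct, fct_cte; lra.
    + unfold minus_fct, fct_cte; lra.
    + exists s. unfold minus_fct, fct_cte in Hs0. split; auto; lra.
Qed.

Lemma gbetween a b g g' t y x :
  (forall x, in_ooI a b x -> derivable_pt_lim g x (g' x)) ->
  (forall x, in_ooI a b x -> g' x <> 0) ->
  in_ooI a b t -> in_ooI a b y -> in_ooI a b x -> t < y -> y < x ->
  (g t < g y < g x) \/ (g x < g y < g t).
Proof.
  intros Hg Hg0 Ht Hy Hx Hty Hyx.
  assert (Hc : forall u v, in_ooI a b u -> in_ooI a b v -> forall z, u <= z <= v -> continuity_pt g z).
  { intros u v Hu Hv z Hz. apply derivable_continuous_pt. exists (g' z). apply Hg. apply in_between with u v; auto. }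
  assert (I1 := ginj a b g g' t y Hg Hg0 Ht Hy Hty).
  assert (I2 := ginj a b g g' y x Hg Hg0 Hy Hx Hyx).
  assert (I3 := ginj a b g g' t x Hg Hg0 Ht Hx ltac:(lra)).
  destruct (Rlt_dec (g t) (g y)) as [A|A]; destruct (Rlt_dec (g y) (g x)) as [B|B].
  - left; lra.
  -
    exfalso. destruct (Rlt_dec (g t) (g x)) as [C|C].
    + destruct (ivt_gen g t y (g x)) as [s [Hs Hs2]]; auto. { apply Hc; auto. } { lra. }
      apply (ginj a b g g' s x Hg Hg0); auto. apply in_between with t y; auto. lra.
    + destruct (ivt_gen g y x (g t)) as [s [Hs Hs2]]; auto. { apply Hc; auto. } { lra. }
      apply (ginj a b g g' t s Hg Hg0); auto. apply in_between with y x; auto. lra.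
  - exfalso. destruct (Rlt_dec (g t) (g x)) as [C|C].
    + destruct (ivt_gen g y x (g t)) as [s [Hs Hs2]]; auto. { apply Hc; auto. } { lra. }
      apply (ginj a b g g' t s Hg Hg0); auto. apply in_between with y x; auto. lra.
    + destruct (ivt_gen g t y (g x)) as [s [Hs Hs2]]; auto. { apply Hc; auto. } { lra. }
      apply (ginj a b g g' s x Hg Hg0); auto. apply in_between with t y; auto. lra.
  - right; lra.
Qed.

Lemma gsign a b g g' y x :
  (forall x, in_ooI a b x -> derivable_pt_lim g x (g' x)) ->
  (forall x, in_ooI a b x -> g' x <> 0) ->
  lim_left a b g (Fin 0) ->
  in_ooI a b y -> in_ooI a b x -> y < x ->
  (0 < g y < g x) \/ (g x < g y < 0).
Proof.
  intros Hg Hg0 Hl Hy Hx Hyx.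
  destruct (exL a b y Hy) as [t' [Ht' Ht'y]].
  destruct (gbetween a b g g' t' y x Hg Hg0 Ht' Hy Hx Ht'y Hyx) as [C|C].
  - left. enough (0 <= g t') by lra.
    apply Rnot_lt_le; intro Hneg.
    destruct (proj1 (evL_iff a b y _ Hy) (Hl (- g t') ltac:(lra))) as [u [Hu HP]].
    destruct (exL a b (Rmin u t') (in_min a b u t' Hu Ht')) as [t [Ht Htl]].
    assert (t < u) by (apply Rlt_le_trans with (1 := Htl); apply Rmin_l).
    assert (t < t') by (apply Rlt_le_trans with (1 := Htl); apply Rmin_r).
    specialize (HP t Ht H). rewrite Rminus_0_r in HP.
    destruct (gbetween a b g g' t t' y Hg Hg0 Ht Ht' Hy H0 Ht'y) as [D|D]; [|lra].
    apply Rabs_def2 in HP. lra.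
  - right. enough (g t' <= 0) by lra.
    apply Rnot_lt_le; intro Hneg.
    destruct (proj1 (evL_iff a b y _ Hy) (Hl (g t') ltac:(lra))) as [u [Hu HP]].
    destruct (exL a b (Rmin u t') (in_min a b u t' Hu Ht')) as [t [Ht Htl]].
    assert (t < u) by (apply Rlt_le_trans with (1 := Htl); apply Rmin_l).
    assert (t < t') by (apply Rlt_le_trans with (1 := Htl); apply Rmin_r).
    specialize (HP t Ht H). rewrite Rminus_0_r in HP.
    destruct (gbetween a b g g' t t' y Hg Hg0 Ht Ht' Hy H0 Ht'y) as [D|D]; [lra|].
    apply Rabs_def2 in HP. lra.
Qed.

Lemma conv a b f g f' g' q r y x :
  (forall x, in_ooI a b x -> derivable_pt_lim f x (f' x)) ->
  (forall x, in_ooI a b x -> derivable_pt_lim g x (g' x)) ->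
  (forall x, in_ooI a b x -> g' x <> 0) ->
  lim_left a b g (Fin 0) ->
  (forall x, q x = f x / g x) -> (forall x, r x = f' x / g' x) ->
  in_ooI a b y -> in_ooI a b x -> y < x ->
  exists z w, y < z < x /\ 0 < w < 1 /\ w = g y / g x /\
    q x - q y = (1 - w) * (r z - q y) /\ q x - r z = w * (q y - r z).
Proof.
  intros Hf Hg Hg0 Hl Hq Hr Hy Hx Hyx.
  destruct (cauchy a b f g f' g' y x Hf Hg Hy Hx Hyx) as [z [Hz Hc]].
  assert (Hzin : in_ooI a b z) by (apply in_between with y x; auto; lra).
  assert (Hs := gsign a b g g' y x Hg Hg0 Hl Hy Hx Hyx).
  assert (gx0 : g x <> 0) by lra. assert (gy0 : g y <> 0) by lra.
  assert (gd0 : g x - g y <> 0) by lra. assert (gz0 := Hg0 z Hzin).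
  assert (Hfz : f' z = (f x - f y) * g' z / (g x - g y)).
  { apply (Rmult_eq_reg_l (g x - g y)); auto. rewrite Hc. field; auto. }
  exists z, (g y / g x). split; auto. split.
  - destruct Hs as [[A B]|[A B]].
    + split. apply Rdiv_lt_0_compat; lra.
      apply (Rmult_lt_reg_r (g x)); [lra|]. unfold Rdiv; rewrite Rmult_assoc, Rinv_l; lra.
    + replace (g y / g x) with ((- g y) / (- g x)) by (field; auto).
      split. apply Rdiv_lt_0_compat; lra.
      apply (Rmult_lt_reg_r (- g x)); [lra|]. unfold Rdiv; rewrite Rmult_assoc, Rinv_l; lra.
  - split; auto. rewrite !Hq, Hr, Hfz. split; field; repeat split; auto.
Qed.


Lemma cvx_lt w p s z m : 0 < w < 1 -> z - p = (1 - w) * (s - p) -> p <= m -> s < m -> z < m.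
Proof. intros. nra. Qed.

Lemma pick_below a b u v : in_ooI a b u -> in_ooI a b v -> exists t, in_ooI a b t /\ t < u /\ t < v.
Proof.
  intros Hu Hv. destruct (exL a b (Rmin u v) (in_min a b u v Hu Hv)) as [t [Ht Htl]].
  exists t; split; auto. split; apply Rlt_le_trans with (1 := Htl); [apply Rmin_l | apply Rmin_r].
Qed.

Lemma pick_above a b u v : in_ooI a b u -> in_ooI a b v -> exists t, in_ooI a b t /\ u < t /\ v < t.
Proof.
  intros Hu Hv. destruct (exR a b (Rmax u v) (in_max a b u v Hu Hv)) as [t [Ht Htl]].
  exists t; split; auto. split; apply Rle_lt_trans with (2 := Htl); [apply Rmax_l | apply Rmax_r].
Qed.

Lemma core a b f g f' g' q r c lam :
  (forall x, in_ooI a b x -> derivable_pt_lim f x (f' x)) ->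
  (forall x, in_ooI a b x -> derivable_pt_lim g x (g' x)) ->
  (forall x, in_ooI a b x -> g' x <> 0) ->
  in_ooI a b c ->
  (forall x, q x = f x / g x) -> (forall x, r x = f' x / g' x) ->
  lim_left a b g (Fin 0) -> lim_left a b q (Fin lam) ->
  strict_incr_on a (Fin c) r -> strict_decr_on (Fin c) b r ->
  (exists L, lim_right a b q L) /\
  forall L, lim_right a b q L -> ((forall x, in_ooI a b x -> q x > lam) <-> ER_ge L lam).
Proof.
  intros Hf Hg Hg0 Hc Hq Hr Hgl Hql Hinc Hdec.
  pose proof (conv a b f g f' g' q r) as CV0.
  assert (CV : forall y x, in_ooI a b y -> in_ooI a b x -> y < x ->
     exists z w, y < z < x /\ 0 < w < 1 /\ w = g y / g x /\
    q x - q y = (1 - w) * (r z - q y) /\ q x - r z = w * (q y - r z)) by (intros; apply CV0; auto).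
  clear CV0.
  assert (INC : forall u v, in_ooI a b u -> in_ooI a b v -> u < v -> v < c -> r u < r v).
  { intros u v Hu Hv Huv Hvc. apply Hinc; auto; apply (in_lowc a b c); auto; split; auto; lra. }
  assert (DEC : forall u v, in_ooI a b u -> in_ooI a b v -> c < u -> u < v -> r v < r u).
  { intros u v Hu Hv Hcu Huv. apply Hdec; auto; apply (in_upc a b c); auto; split; auto; lra. }
  assert (INB : forall y x z, in_ooI a b y -> in_ooI a b x -> y < z < x -> in_ooI a b z).
  { intros y x z Hy Hx Hz. apply in_between with y x; auto; lra. }
  assert (HA : forall y, in_ooI a b y -> y < c -> q y <= r y).
  { intros y Hy Hyc. apply Rnot_lt_le; intro Hlt.
    set (B := 1 + Rabs (lam - r y)).
    assert (HB : 0 < B) by (unfold B; pose proof (Rabs_pos (lam - r y)); lra).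
    destruct (exR a b y Hy) as [x2 [Hx2 Hyx2]].
    assert (Hgy : 0 < Rabs (g y)).
    { apply Rabs_pos_lt. destruct (gsign a b g g' y x2 Hg Hg0 Hgl Hy Hx2 Hyx2); lra. }
    destruct (proj1 (evL_iff a b y _ Hy) (Hql 1 ltac:(lra))) as [u1 [Hu1 P1]].
    assert (Heps : 0 < (q y - r y) / B * Rabs (g y)).
    { apply Rmult_lt_0_compat; auto. apply Rdiv_lt_0_compat; lra. }
    destruct (proj1 (evL_iff a b y _ Hy) (Hgl _ Heps)) as [u2 [Hu2 P2]].
    destruct (pick_below a b u1 u2 Hu1 Hu2) as [t0 [Ht0 [Ht01 Ht02]]].
    destruct (pick_below a b t0 y Ht0 Hy) as [t [Ht [Htt0 Hty]]].
    specialize (P1 t Ht ltac:(lra)). specialize (P2 t Ht ltac:(lra)).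
    rewrite Rminus_0_r in P2.
    destruct (CV t y Ht Hy Hty) as [z [w [Hz [Hw [Hweq [E1 E2]]]]]].
    assert (Hrz : r z < r y) by (apply INC; eauto; lra).
    assert (Hwa : w * Rabs (g y) = Rabs (g t)).
    { rewrite <- (Rabs_pos_eq w) by lra. rewrite <- Rabs_mult. f_equal. rewrite Hweq.
      field. intro H0. rewrite H0, Rabs_R0 in Hgy; lra. }
    assert (Hw2 : w < (q y - r y) / B).
    { apply (Rmult_lt_reg_r (Rabs (g y))); auto. lra. }
    assert (Hw3 : w * B < q y - r y).
    { apply (Rmult_lt_compat_r B) in Hw2; auto. unfold Rdiv in Hw2.
      rewrite Rmult_assoc, Rinv_l in Hw2; lra. }
    assert (Hqt : q t - r y < B).
    { apply Rabs_def2 in P1. pose proof (Rle_abs (lam - r y)). unfold B; lra. }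
    assert (Hid : q y - r y = w * (q t - r y) + (1 - w) * (r z - r y)).
    { replace (q y) with (q t + (1 - w) * (r z - q t)) by lra. ring. }
    nra. }
  assert (HBm : forall y x, in_ooI a b y -> in_ooI a b x -> y < x -> y < c -> x <= c -> q y < q x).
  { intros y x Hy Hx Hyx Hyc Hxc.
    destruct (CV y x Hy Hx Hyx) as [z [w [Hz [Hw [Hweq [E1 E2]]]]]].
    assert (r y < r z) by (apply INC; eauto; lra).
    assert (q y <= r y) by (apply HA; auto).
    assert (0 < (1 - w) * (r z - q y)) by (apply Rmult_lt_0_compat; lra).
    lra. }
  assert (HB' : forall x, in_ooI a b x -> x <= c -> lam < q x).
  { intros x Hx Hxc. destruct (exL a b x Hx) as [m [Hm Hmx]].
    assert (q m < q x) by (apply HBm; auto; lra).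
    enough (lam <= q m) by lra.
    apply Rnot_lt_le; intro Hlt.
    destruct (proj1 (evL_iff a b x _ Hx) (Hql (lam - q m) ltac:(lra))) as [u [Hu P]].
    destruct (pick_below a b u m Hu Hm) as [t [Ht [Htu Htm]]].
    specialize (P t Ht Htu). apply Rabs_def2 in P.
    assert (q t < q m) by (apply HBm; auto; lra). lra. }
  split.
  -
    destruct (classic (exists y, in_ooI a b y /\ c < y /\ r y <= q y)) as [[y [Hy [Hcy Hry]]] | Hn].
    + assert (Hgt : forall x, in_ooI a b x -> y < x -> r x < q x).
      { intros x Hx Hyx. destruct (CV y x Hy Hx Hyx) as [z [w [Hz [Hw [Hweq [E1 E2]]]]]].
        assert (r z < r y) by (apply DEC; eauto; lra).
        assert (r x < r z) by (apply DEC; eauto; lra).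
        assert (0 < w * (q y - r z)) by (apply Rmult_lt_0_compat; lra). lra. }
      apply mono_limR_dec with y; auto. intros u v Hu Hv Hyu Huv.
      destruct (CV u v Hu Hv Huv) as [z [w [Hz [Hw [Hweq [E1 E2]]]]]].
      assert (r z < r u) by (apply DEC; eauto; lra).
      assert (r u < q u) by (apply Hgt; auto).
      assert (0 < (1 - w) * (q u - r z)) by (apply Rmult_lt_0_compat; lra). lra.
    + assert (Hlt : forall y, in_ooI a b y -> c < y -> q y < r y).
      { intros y Hy Hcy. apply Rnot_le_lt; intro; apply Hn; exists y; auto. }
      apply mono_limR with c; auto. intros u v Hu Hv Hcu Huv.
      destruct (CV u v Hu Hv Huv) as [z [w [Hz [Hw [Hweq [E1 E2]]]]]].
      assert (r v < r z) by (apply DEC; eauto; lra).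
      assert (q v < r v) by (apply Hlt; auto; lra).
      assert (q u < r z) by nra.
      assert (0 < (1 - w) * (r z - q u)) by (apply Rmult_lt_0_compat; lra). lra.
  - intros L HL. split.
    + intros Hall. destruct L; simpl; auto.
      * apply Rnot_lt_le; intro Hlt.
        destruct (proj1 (evR_iff a b c _ Hc) (HL (lam - r0) ltac:(lra))) as [u [Hu P]].
        destruct (exR a b u Hu) as [x [Hx Hux]].
        specialize (P x Hx Hux). apply Rabs_def2 in P. specialize (Hall x Hx). lra.
      * destruct (proj1 (evR_iff a b c _ Hc) (HL lam)) as [u [Hu P]].
        destruct (exR a b u Hu) as [x [Hx Hux]].
        specialize (P x Hx Hux). specialize (Hall x Hx). lra.
    + intros HLge x Hx. destruct (Rle_dec x c) as [Hxc|Hxc]; [apply HB'; auto|].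
      apply Rnot_le_lt; intro Hx0.
      assert (Hqc : lam < q c) by (apply HB'; auto; lra).
      destruct (CV c x Hc Hx ltac:(lra)) as [z [w [Hz [Hw [Hweq [E1 E2]]]]]].
      assert (Hzx : r z < q x) by nra.
      destruct (exR a b x Hx) as [x1 [Hx1 Hxx1]].
      destruct (CV x x1 Hx Hx1 Hxx1) as [z1 [w1 [Hz1 [Hw1 [Hweq1 [E11 E21]]]]]].
      assert (r z1 < r z) by (apply DEC; eauto; lra).
      assert (Hqx1 : q x1 < lam) by (apply (cvx_lt w1 (q x) (r z1)); auto; lra).
      set (mu := Rmax (q x1) (r z)).
      assert (Hmu : mu < lam) by (apply Rmax_lub_lt; lra).
      assert (Hbd : forall x', in_ooI a b x' -> x1 < x' -> q x' < mu).
      { intros x' Hx' Hlt. destruct (CV x1 x' Hx1 Hx' Hlt) as [z2 [w2 [Hz2 [Hw2 [_ [E12 _]]]]]].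
        assert (r z2 < r z) by (apply DEC; eauto; lra).
        apply (cvx_lt w2 (q x1) (r z2)); auto. apply Rmax_l.
        apply Rlt_le_trans with (r z); auto. apply Rmax_r. }
      destruct L; simpl in HLge; auto.
      * destruct (proj1 (evR_iff a b c _ Hc) (HL (lam - mu) ltac:(lra))) as [u [Hu P]].
        destruct (pick_above a b u x1 Hu Hx1) as [x' [Hx' [H1 H2]]].
        specialize (P x' Hx' H1). apply Rabs_def2 in P. specialize (Hbd x' Hx' H2). lra.
      * destruct (proj1 (evR_iff a b c _ Hc) (HL mu)) as [u [Hu P]].
        destruct (pick_above a b u x1 Hu Hx1) as [x' [Hx' [H1 H2]]].
        specialize (P x' Hx' H1). specialize (Hbd x' Hx' H2). lra.
Qed.


Lemma core2 a b f g f' g' q r c lam :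
  (forall x, in_ooI a b x -> derivable_pt_lim f x (f' x)) ->
  (forall x, in_ooI a b x -> derivable_pt_lim g x (g' x)) ->
  (forall x, in_ooI a b x -> g' x <> 0) ->
  in_ooI a b c ->
  (forall x, q x = f x / g x) -> (forall x, r x = f' x / g' x) ->
  lim_left a b g (Fin 0) -> lim_left a b q (Fin lam) ->
  strict_decr_on a (Fin c) r -> strict_incr_on (Fin c) b r ->
  (exists L, lim_right a b q L) /\
  forall L, lim_right a b q L -> ((forall x, in_ooI a b x -> q x < lam) <-> ER_le L lam).
Proof.
  intros Hf Hg Hg0 Hc Hq Hr Hgl Hql Hdec Hinc.
  destruct (core a b (fun x => - f x) g (fun x => - f' x) g' (fun x => - q x) (fun x => - r x) c (- lam))
    as [[L HL] H2]; auto.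
  - intros x Hx. exact (derivable_pt_lim_opp f x (f' x) (Hf x Hx)).
  - intros x; rewrite Hq; unfold Rdiv; ring.
  - intros x; rewrite Hr; unfold Rdiv; ring.
  - apply (tends_opp _ q (Fin lam)); auto. intros P Q; apply evL_mono.
  - intros x y Hx Hy Hxy. specialize (Hdec x y Hx Hy Hxy). lra.
  - intros x y Hx Hy Hxy. specialize (Hinc x y Hx Hy Hxy). lra.
  - split.
    + exists (negER L). apply tends_ext with (F := fun x => - - q x).
      * intros P Q; apply evR_mono.
      * intros; ring.
      * apply tends_opp with (F := fun x => - q x); auto. intros P Q; apply evR_mono.
    + intros L' HL'. assert (HH := H2 (negER L') (tends_opp _ q L' ltac:(intros P Q; apply evR_mono) HL')).
      assert (E : ER_ge (negER L') (- lam) <-> ER_le L' lam) by (destruct L'; simpl; lra).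
      rewrite <- E, <- HH. split; intros H x Hx; specialize (H x Hx); lra.
Qed.

Lemma deriv_refl f x l : derivable_pt_lim f (- x) l -> derivable_pt_lim (fun y => f (- y)) x (- l).
Proof.
  intros H. replace (- l) with (l * (-1)) by ring.
  apply (derivable_pt_lim_comp (- id)%F f x (-1) l).
  - apply derivable_pt_lim_opp, derivable_pt_lim_id.
  - exact H.
Qed.

Lemma in_neg' a b x : in_ooI a b x -> in_ooI (negER b) (negER a) (- x).
Proof. intros H. apply in_neg. rewrite Ropp_involutive; auto. Qed.

Lemma partII a b f g f' g' q r c lam :
  (forall x, in_ooI a b x -> derivable_pt_lim f x (f' x)) ->
  (forall x, in_ooI a b x -> derivable_pt_lim g x (g' x)) ->
  (forall x, in_ooI a b x -> g' x <> 0) ->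
  in_ooI a b c ->
  (forall x, q x = f x / g x) -> (forall x, r x = f' x / g' x) ->
  lim_right a b g (Fin 0) -> lim_right a b q (Fin lam) ->
  ((strict_incr_on a (Fin c) r /\ strict_decr_on (Fin c) b r) ->
    (exists L, lim_left a b q L) /\
    forall L, lim_left a b q L -> ((forall x, in_ooI a b x -> q x > lam) <-> ER_ge L lam)) /\
  ((strict_decr_on a (Fin c) r /\ strict_incr_on (Fin c) b r) ->
    (exists L, lim_left a b q L) /\
    forall L, lim_left a b q L -> ((forall x, in_ooI a b x -> q x < lam) <-> ER_le L lam)).
Proof.
  intros Hf Hg Hg0 Hc Hq Hr Hgl Hql.
  assert (Hf' : forall x, in_ooI (negER b) (negER a) x ->
            derivable_pt_lim (fun y => f (- y)) x ((fun y => - f' (- y)) x)).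
  { intros x Hx. apply deriv_refl, Hf. apply in_neg; auto. }
  assert (Hg' : forall x, in_ooI (negER b) (negER a) x ->
            derivable_pt_lim (fun y => g (- y)) x ((fun y => - g' (- y)) x)).
  { intros x Hx. apply deriv_refl, Hg. apply in_neg; auto. }
  assert (Hg0' : forall x, in_ooI (negER b) (negER a) x -> (fun y => - g' (- y)) x <> 0).
  { intros x Hx. simpl. intro E. apply (Hg0 (- x)). apply in_neg; auto. lra. }
  assert (Hc' : in_ooI (negER b) (negER a) (- c)) by (apply in_neg'; auto).
  assert (Hq' : forall x, (fun y => q (- y)) x = (fun y => f (- y)) x / (fun y => g (- y)) x).
  { intros x; simpl; auto. }
  assert (Hr' : forall x, (fun y => r (- y)) x = (fun y => - f' (- y)) x / (fun y => - g' (- y)) x).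
  { intros x; simpl. rewrite Hr. unfold Rdiv. rewrite Rinv_opp. ring. }
  assert (Hgl' := proj1 (limR_refl a b g (Fin 0)) Hgl).
  assert (Hql' := proj1 (limR_refl a b q (Fin lam)) Hql).
  assert (Htr : forall P : R -> Prop, (forall x, in_ooI (negER b) (negER a) x -> P (q (- x))) <->
                                   (forall x, in_ooI a b x -> P (q x))).
  { intros P; split; intros H x Hx.
    - rewrite <- (Ropp_involutive x). apply H. apply in_neg'; auto.
    - apply H. apply in_neg; auto. }
  assert (IN1 : forall x, in_ooI (negER b) (Fin (- c)) x -> in_ooI (Fin c) b (- x)).
  { intros x Hx. apply (proj1 (in_neg (Fin c) b x)); auto. }
  assert (IN2 : forall x, in_ooI (Fin (- c)) (negER a) x -> in_ooI a (Fin c) (- x)).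
  { intros x Hx. apply (proj1 (in_neg a (Fin c) x)); auto. }
  split; intros [H1 H2].
  - destruct (core (negER b) (negER a) _ _ _ _ _ (fun y => r (- y)) (- c) lam Hf' Hg' Hg0' Hc' Hq' Hr' Hgl' Hql')
      as [[L HL] HH].
    + intros x y Hx Hy Hxy. apply H2; auto; lra.
    + intros x y Hx Hy Hxy. apply H1; auto; lra.
    + split.
      * exists L. apply limL_refl; auto.
      * intros L' HL'. rewrite <- (HH L' (proj1 (limL_refl _ _ _ _) HL')).
        symmetry. apply (Htr (fun v => v > lam)).
  - destruct (core2 (negER b) (negER a) _ _ _ _ _ (fun y => r (- y)) (- c) lam Hf' Hg' Hg0' Hc' Hq' Hr' Hgl' Hql')
      as [[L HL] HH].
    + intros x y Hx Hy Hxy. apply H2; auto; lra.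
    + intros x y Hx Hy Hxy. apply H1; auto; lra.
    + split.
      * exists L. apply limL_refl; auto.
      * intros L' HL'. rewrite <- (HH L' (proj1 (limL_refl _ _ _ _) HL')).
        symmetry. apply (Htr (fun v => v < lam)).
Qed.

Theorem mainTheorem5 (a b : ER) (f g f' g' : R -> R) (c : R)
  (Hab : ER_lt a b)
  (Hf : forall x, in_ooI a b x -> derivable_pt_lim f x (f' x))
  (Hg : forall x, in_ooI a b x -> derivable_pt_lim g x (g' x))
  (Hg0 : forall x, in_ooI a b x -> g' x <> 0)
  (Hc : in_ooI a b c) :
  let r := fun x => f' x / g' x in
  let q := fun x => f x / g x in
  let caseI := strict_incr_on a (Fin c) r /\ strict_decr_on (Fin c) b r in
  let caseII := strict_decr_on a (Fin c) r /\ strict_incr_on (Fin c) b r in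
  (* (i) *)
  (forall lam : R,
     lim_left a b f (Fin 0) -> lim_left a b g (Fin 0) -> lim_left a b q (Fin lam) ->
     (caseI ->
        (exists L, lim_right a b q L) /\
        forall L, lim_right a b q L ->
          ((forall x, in_ooI a b x -> q x > lam) <-> ER_ge L lam)) /\
     (caseII ->
        (exists L, lim_right a b q L) /\
        forall L, lim_right a b q L ->
          ((forall x, in_ooI a b x -> q x < lam) <-> ER_le L lam))) /\
  (* (ii) *)
  (forall lam : R,
     lim_right a b f (Fin 0) -> lim_right a b g (Fin 0) -> lim_right a b q (Fin lam) ->
     (caseI ->
        (exists L, lim_left a b q L) /\
        forall L, lim_left a b q L ->
          ((forall x, in_ooI a b x -> q x > lam) <-> ER_ge L lam)) /\
     (caseII ->
        (exists L, lim_left a b q L) /\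
        forall L, lim_left a b q L ->
          ((forall x, in_ooI a b x -> q x < lam) <-> ER_le L lam))).
Proof.
  intros r q caseI caseII. split.
  - intros lam Hf0 Hgl Hql. split.
    + intros [H1 H2]. apply (core a b f g f' g' q r c lam); auto.
    + intros [H1 H2]. apply (core2 a b f g f' g' q r c lam); auto.
  - intros lam Hf0 Hgl Hql.
    apply (partII a b f g f' g' q r c lam); auto.
Qed.
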